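(* Let $p\ge2$ and $c>0$ be such that $N_p^c$ exists, and suppose that for every $c'\in(0,c]$ the set $N_p^{c'}$ has the star property: for every $x\in N_p^{c'}$ and every $\lambda\in[0,1)$, $\lambda x\in\mathrm{Int}(N_p^{c'})$. Then $V_p$ is radially increasing on $N_p^c$: for every $x\in N_p^c\setminus\{0\}$ and all $0\le\lambda_1<\lambda_2\le1$, $V_p(\lambda_1x)<V_p(\lambda_2 x)$.
   Context: Let $f:\mathbb{R}^n\to\mathbb{R}^n$ be real-analytic with $f(0)=0$, and assume all eigenvalues of $A=\frac{\partial f}{\partial x}(0)$ have negative real parts. $\|\cdot\|$ is the Euclidean norm. Let $V$ be the real-analytic function on a neighborhood of $0$ with $\langle\nabla V(x),f(x)\rangle=-\|x\|^2$, $V(0)=0$, and for $p\ge 2$ let $V_p$ be the Taylor polynomial of $V$ at $0$ of degree $p$ (terms of degrees $2,\dots,p$). Let $G_p$ be the maximal domain (connected open set) containing $0$ such that $V_p(x)>0$ and $\langle\nabla V_p(x),f(x)\rangle<0$ for all $x\in G_p\setminus\{0\}$. A closed connected set $S\subset\mathbb{R}^n$ is called $(p,c)$-admissible if: $0\in\mathrm{Int}(S)$; $V_p(x)<c$ for all $x\in\mathrm{Int}(S)$; $V_p(x)=c$ for all $x\in\partial S$; and $S$ is compact with $S\subset G_p$. For given $p,c$ there is at most one such set; when it exists it is denoted $N_p^c$. *)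

(* Defs.v *)
From HB Require Import structures.
From mathcomp Require Import all_boot all_order all_algebra.
From mathcomp Require Import all_classical all_reals all_analysis.
From mathcomp Require Import complex.

Set Implicit Arguments.
Unset Strict Implicit.
Unset Printing Implicit Defensive.

Import Order.TTheory GRing.Theory Num.Theory.
Import numFieldNormedType.Exports.
Local Open Scope classical_set_scope.
Local Open Scope ring_scope.

Section Defs.
Variable R : realType.
Variable n : nat.

(* Squared Euclidean norm  ||x||^2 = sum_i x_i^2  (the library norm on
   'rV_n is the max norm, so we write the Euclidean one explicitly). *)
Definition sqnorm (x : 'rV[R]_n) : R := \sum_(i < n) x 0 i ^+ 2.

(* Multi-indices alpha : 'I_n -> nat of total degree k are encoded as
   a : {ffun 'I_n -> 'I_k.+1} with \sum_i a i = k. *)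
Definition homog_part (k : nat) (c : {ffun 'I_n -> 'I_k.+1} -> R)
    (h : 'rV[R]_n) : R :=
  \sum_(a : {ffun 'I_n -> 'I_k.+1} | (\sum_(i < n) (a i : nat))%N == k)
     c a * \prod_(i < n) h 0 i ^+ a i.

Definition abs_homog_part (k : nat) (c : {ffun 'I_n -> 'I_k.+1} -> R)
    (r : R) : R :=
  \sum_(a : {ffun 'I_n -> 'I_k.+1} | (\sum_(i < n) (a i : nat))%N == k)
     `|c a| * r ^+ k.

(* g is real-analytic at x0: near x0 it is the sum of a power series
   sum_alpha c_alpha (x - x0)^alpha that converges absolutely on a
   polydisc of radius r > 0 (terms grouped by total degree). *)
Definition analytic_at (g : 'rV[R]_n -> R) (x0 : 'rV[R]_n) : Prop :=
  exists (c : forall k : nat, {ffun 'I_n -> 'I_k.+1} -> R) (r : R),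
    [/\ 0 < r,
        (exists l : R, series (fun k => abs_homog_part (c k) r) @ \oo --> l) &
        forall h : 'rV[R]_n, (forall i, `|h 0 i| < r) ->
          series (fun k => homog_part (c k) h) @ \oo --> g (x0 + h)].

Definition analytic_on (g : 'rV[R]_n -> R) (U : set 'rV[R]_n) : Prop :=
  forall x, U x -> analytic_at g x.

Definition hurwitz (A : 'M[R]_n) : Prop :=
  forall z : R[i],
    root (map_poly (fun x : R => Complex x 0) (char_poly A)) z -> Re z < 0.

(* Taylor polynomial of V at 0 of degree p, terms of degrees 2..p:
   the degree-k homogeneous part of the Taylor expansion is
   (1/k!) d^k/dt^k V(t x) |_{t=0}. *)
Definition taylor_pol (V : 'rV[R]_n -> R) (p : nat) (x : 'rV[R]_n) : R :=
  \sum_(2 <= k < p.+1)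
     (derive1n k (fun t : R => V (t *: x)) 0) / (k`!)%:R.

(* <grad W(x), f(x)> written as the differential of W at x applied to f x. *)
Definition lie_deriv (f : 'rV[R]_n -> 'rV[R]_n) (W : 'rV[R]_n -> R)
    (x : 'rV[R]_n) : R := 'd W x (f x).

(* G_p: the maximal domain (connected open set) containing 0 on which
   W > 0 and <grad W, f> < 0 away from 0 = union of all such domains. *)
Definition Gdom (f : 'rV[R]_n -> 'rV[R]_n) (W : 'rV[R]_n -> R)
    : set 'rV[R]_n :=
  [set x | exists S : set 'rV[R]_n,
     [/\ open S, connected S, S 0,
         (forall y, S y -> y != 0 -> 0 < W y /\ lie_deriv f W y < 0)
       & S x]].

Definition boundary (S : set 'rV[R]_n) : set 'rV[R]_n :=
  closure S `\` interior S.

Definition admissible (f : 'rV[R]_n -> 'rV[R]_n) (W : 'rV[R]_n -> R)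
    (c : R) (S : set 'rV[R]_n) : Prop :=
  [/\ closed S, connected S & interior S 0] /\
  [/\ (forall x, interior S x -> W x < c),
      (forall x, boundary S x -> W x = c),
      compact S & S `<=` Gdom f W].

Definition star_property (S : set 'rV[R]_n) : Prop :=
  forall x, S x -> forall l : R, 0 <= l -> l < 1 -> interior S (l *: x).

End Defs.

(* Main.v *)
Require Import Defs.
From HB Require Import structures.
From mathcomp Require Import all_boot all_order all_algebra.
From mathcomp Require Import all_classical all_reals all_analysis.
From mathcomp Require Import complex.
From mathcomp Require Import ring lra.
Import Order.TTheory GRing.Theory Num.Theory.
Import numFieldNormedType.Exports.
Local Open Scope classical_set_scope.
Local Open Scope ring_scope.

Set Implicit Arguments. Unset Strict Implicit. Unset Printing Implicit Defensive.

Section Pol.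
Variable R : realType.
Variable n : nat.
Local Notation V := 'rV[R]_n.

Lemma entry_le_norm (y : V) i : `|y 0 i| <= `|y|.
Proof.
rewrite [X in _ <= X]mx_normrE.
by apply/bigmax_geP; right; exists (0, i).
Qed.

Definition Pol (P : V -> R) : Prop :=
 (forall y, differentiable P y) /\
 forall M : R, 0 < M -> exists K : R, 0 < K /\ forall y z : V, `|y| <= M -> `|z| <= M ->
   [/\ `|P y| <= K, `|'d P y z| <= K * `|z| & `|P (y + z) - P y - 'd P y z| <= K * `|z| ^+ 2].

Lemma Pol_cst a : Pol (fun _ => a).
Proof.
split=> [y|M M0]; first exact: differentiable_cst.
exists (`|a| + 1); split=> [|y z _ _]; first by rewrite ltr_pwDr // normr_ge0.
have -> : 'd (fun _ : V => a) y = 0 :> (V -> R) by exact: diff_cst.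
rewrite /= normr0 subrr sub0r normrN normr0; split.
- by rewrite lerDl.
- by rewrite mulr_ge0 // addr_ge0.
- by rewrite mulr_ge0 ?exprn_ge0 // addr_ge0.
Qed.

Lemma diff_coord (i : 'I_n) (y : V) :
  'd (fun N : V => N 0 i) y = (fun N : V => N 0 i) :> (V -> R).
Proof.
have @f : {linear V -> R}.
  by exists (fun N : V => N 0 i); do 2![eexists]; do ?[constructor];
     rewrite ?mxE// => ? *; rewrite ?mxE//; move=> ?; rewrite !mxE.
rewrite (_ : (fun _ => _) = f) //; apply: diff_lin.
exact: coord_continuous.
Qed.

Lemma Pol_coord (i : 'I_n) : Pol (fun N : V => N 0 i).
Proof.
split=> [y|M M0]; first exact: differentiable_coord.
exists (M + 1); split=> [|y z yM zM]; first by rewrite addr_gt0.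
rewrite diff_coord; split.
- by rewrite (le_trans (entry_le_norm _ _)) // (le_trans yM) // lerDl.
- rewrite (le_trans (entry_le_norm _ _)) // ler_peMl // ?normr_ge0 //.
  by rewrite lerDr ltW.
- rewrite mxE; set u := z 0 i; set w := y 0 i.
  have -> : w + u - w - u = 0 by rewrite [w + u]addrC addrK subrr.
  
  by rewrite normr0 mulr_ge0 // ?exprn_ge0 // addr_ge0 // ltW.
Qed.

Lemma add_id (a b c d e f : R) :
  a + b - (c + d) - (e + f) = (a - c - e) + (b - d - f).
Proof. ring. Qed.

Lemma mul_id (p q A B dA dB : R) :
  p * q - A * B - (A * dB + B * dA) =
  A * (q - B - dB) + dA * dB + dA * (q - B - dB) + (p - A - dA) * q.
Proof. ring. Qed.

Lemma Pol_add P Q : Pol P -> Pol Q -> Pol (P + Q).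
Proof.
move=> [dP bP] [dQ bQ]; split=> [y|M M0]; first exact: differentiableD.
have [K1 [K10 H1]] := bP M M0; have [K2 [K20 H2]] := bQ M M0.
exists (K1 + K2); split=> [|y z yM zM]; first by rewrite addr_gt0.
have [a1 b1 c1] := H1 y z yM zM; have [a2 b2 c2] := H2 y z yM zM.
rewrite diffD //= !fctE; split.
- by rewrite (le_trans (ler_normD _ _)) // lerD.
- by rewrite (le_trans (ler_normD _ _)) // mulrDl lerD.
- set u := P (y + z) - P y - 'd P y z; set w := Q (y + z) - Q y - 'd Q y z.
  rewrite add_id -/u -/w.
  by rewrite (le_trans (ler_normD _ _)) // mulrDl lerD.
Qed.

Lemma L2 (a b da db K1 K2 M z : R) : 0 <= K1 -> 0 <= K2 -> 0 <= z -> 0 < M ->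
  `|a| <= K1 -> `|db| <= K2 * z -> `|b| <= K2 -> `|da| <= K1 * z ->
  `|a * db + b * da| <= K1 * K2 * (M + 3) * z.
Proof.
move=> k1 k2 z0 M0 h1 h2 h3 h4.
rewrite (le_trans (ler_normD _ _)) // !normrM.
have e1 : `|a| * `|db| <= K1 * K2 * z by rewrite -mulrA ler_pM.
have e2 : `|b| * `|da| <= K1 * K2 * z by rewrite [K1 * K2]mulrC -mulrA ler_pM.
have k0 : 0 <= K1 * K2 * z by rewrite !mulr_ge0.
have kM : 0 <= K1 * K2 * z * M by rewrite mulr_ge0 // ltW.
have -> : K1 * K2 * (M + 3) * z = K1 * K2 * z * M + K1 * K2 * z * 3 by ring.
lra.
Qed.
Lemma L3 (A dA dB eA eB q K1 K2 M z : R) : 0 <= K1 -> 0 <= K2 -> 0 <= z -> 0 < M -> z <= M ->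
  `|A| <= K1 -> `|eB| <= K2 * z ^+ 2 -> `|dA| <= K1 * z -> `|dB| <= K2 * z ->
  `|eA| <= K1 * z ^+ 2 -> `|q| <= K2 ->
  `|A * eB + dA * dB + dA * eB + eA * q| <= K1 * K2 * (M + 3) * z ^+ 2.
Proof.
move=> k1 k2 z0 M0 zM h1 h2 h3 h4 h5 h6.
set z2 := z ^+ 2.
have z20 : 0 <= z2 by rewrite exprn_ge0.
have t1 : `|A * eB| <= K1 * K2 * z2 by rewrite normrM -mulrA ler_pM.
have t2 : `|dA * dB| <= K1 * K2 * z2.
  by rewrite normrM /z2 expr2 mulrACA ler_pM // mulr_ge0.
have t3 : `|dA * eB| <= K1 * K2 * z2 * M.
  rewrite normrM (le_trans (ler_pM _ _ h3 h2)) // ?mulr_ge0 //.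
  have -> : K1 * z * (K2 * z2) = K1 * K2 * z2 * z by ring.
  by rewrite ler_wpM2l // !mulr_ge0.
have t4 : `|eA * q| <= K1 * K2 * z2.
  by rewrite normrM mulrAC ler_pM // mulr_ge0.
have e1 := ler_normD (A * eB + dA * dB + dA * eB) (eA * q).
have e2 := ler_normD (A * eB + dA * dB) (dA * eB).
have e3 := ler_normD (A * eB) (dA * dB).
have -> : K1 * K2 * (M + 3) * z2 = K1 * K2 * z2 * M + K1 * K2 * z2 * 3 by ring.
lra.
Qed.

Lemma Pol_mul P Q : Pol P -> Pol Q -> Pol (P * Q).
Proof.
move=> [dP bP] [dQ bQ]; split=> [y|M M0]; first exact: differentiableM.
have M20 : 0 < M *+ 2 by rewrite mulrn_wgt0.
have [K1 [K10 H1]] := bP _ M20; have [K2 [K20 H2]] := bQ _ M20.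
exists (K1 * K2 * (M + 3)); split=> [|y z yM zM].
  by rewrite !mulr_gt0 // addr_gt0.
have yM2 : `|y| <= M *+ 2 by rewrite (le_trans yM) // mulr2n lerDl ltW.
have zM2 : `|z| <= M *+ 2 by rewrite (le_trans zM) // mulr2n lerDl ltW.
have yzM2 : `|y + z| <= M *+ 2 by rewrite (le_trans (ler_normD _ _)) // mulr2n lerD.
have [a1 b1 c1] := H1 y z yM2 zM2; have [a2 b2 c2] := H2 y z yM2 zM2.
have [a3 _ _] := H2 (y + z) z yzM2 zM2.
rewrite diffM //= !fctE.
have z0 := normr_ge0 z.
have Kpos : 0 <= K1 * K2 by rewrite mulr_ge0 // ltW.
have M3 : 1 <= M + 3 by apply: ler_wpDl; [exact: ltW | rewrite ler1n].
split.
- by rewrite normrM (le_trans (ler_pM _ _ a1 a2)) // ler_peMr.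
- exact: L2 (ltW K10) (ltW K20) z0 M0 a1 b2 a2 b1.
- rewrite mul_id.
  exact: L3 (ltW K10) (ltW K20) z0 M0 zM a1 c2 b1 b2 c1 a3.
Qed.

Lemma Pol_ext P Q : (forall y, P y = Q y) -> Pol P -> Pol Q.
Proof. by move=> e; rewrite (_ : P = Q) //; apply/funext. Qed.

Lemma Pol_add' P Q : Pol P -> Pol Q -> Pol (fun y => P y + Q y).
Proof. by move=> hP hQ; apply: Pol_ext (Pol_add hP hQ) => y. Qed.

Lemma Pol_mul' P Q : Pol P -> Pol Q -> Pol (fun y => P y * Q y).
Proof. by move=> hP hQ; apply: Pol_ext (Pol_mul hP hQ) => y. Qed.

Lemma Pol_sum (I : Type) (s : seq I) (Pr : pred I) (F : I -> V -> R) :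
  (forall i, Pol (F i)) -> Pol (fun y => \sum_(i <- s | Pr i) F i y).
Proof.
move=> hF; elim: s => [|i s IH].
  by apply: Pol_ext (Pol_cst 0) => y; rewrite big_nil.
case Pi: (Pr i).
  by apply: Pol_ext (Pol_add' (hF i) IH) => y; rewrite big_cons Pi.
by apply: Pol_ext IH => y; rewrite big_cons Pi.
Qed.

Lemma Pol_prod (I : Type) (s : seq I) (Pr : pred I) (F : I -> V -> R) :
  (forall i, Pol (F i)) -> Pol (fun y => \prod_(i <- s | Pr i) F i y).
Proof.
move=> hF; elim: s => [|i s IH].
  by apply: Pol_ext (Pol_cst 1) => y; rewrite big_nil.
case Pi: (Pr i).
  by apply: Pol_ext (Pol_mul' (hF i) IH) => y; rewrite big_cons Pi.
by apply: Pol_ext IH => y; rewrite big_cons Pi.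
Qed.

Lemma Pol_exp P k : Pol P -> Pol (fun y => P y ^+ k).
Proof.
move=> hP; elim: k => [|k IH].
  by apply: Pol_ext (Pol_cst 1) => y; rewrite expr0.
by apply: Pol_ext (Pol_mul' hP IH) => y; rewrite exprS.
Qed.

Lemma Pol_homog k (c : {ffun 'I_n -> 'I_k.+1} -> R) :
  Pol (fun y => homog_part c y).
Proof.
apply: Pol_sum => a; apply: Pol_mul'; first exact: Pol_cst.
apply: Pol_prod => i; apply: Pol_exp; exact: Pol_coord.
Qed.
End Pol.

Section PS.
Variable R : realType.

Definition AC (b : nat -> R) (K : R) := cvgn (series (fun m => `|b m| * K ^+ m)).

Lemma AC_mono b K K' : AC b K' -> 0 <= K -> K <= K' -> AC b K.
Proof.
move=> h K0 KK; apply: series_le_cvg h => m.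
- by rewrite mulr_ge0 // exprn_ge0.
- by rewrite mulr_ge0 // exprn_ge0 // (le_trans K0).
- by rewrite ler_wpM2l // lerXn2r // nnegrE (le_trans K0).
Qed.

Lemma AC_cvg b K : AC b `|K| -> cvgn (pseries b K).
Proof.
move=> h; apply: normed_cvg.
rewrite [X in cvgn X](_ : _ = series (fun m => `|b m| * `|K| ^+ m)) //.
by apply/funext => N; rewrite /series /=; apply: eq_bigr => i _;
   rewrite normrM normrX.
Qed.

Lemma binom_lb (K e : R) m : 0 <= K -> 0 <= e ->
  K ^+ m.+1 + m.+1%:R * K ^+ m * e <= (K + e) ^+ m.+1.
Proof.
move=> K0 e0; elim: m => [|m IH]; first by rewrite expr1 expr0 mulr1 mul1r.
rewrite [(K + e) ^+ _]exprS.
apply: le_trans (ler_wpM2l (addr_ge0 K0 e0) IH).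
have hm : 0 <= m.+1%:R * K ^+ m * e ^+ 2 by rewrite !mulr_ge0 ?exprn_ge0.
have -> : (K + e) * (K ^+ m.+1 + m.+1%:R * K ^+ m * e) =
   K ^+ m.+2 + m.+2%:R * K ^+ m.+1 * e + m.+1%:R * K ^+ m * e ^+ 2.
  by rewrite !exprS -[m.+2]addn1 natrD; ring.
by rewrite lerDl.
Qed.

Lemma series_shift1 (u : nat -> R) : cvgn (series u) -> cvgn (series (fun m => u m.+1)).
Proof.
rewrite -(is_cvg_series_restrict 1) => /cvg_ex[l hl]; apply/cvg_ex; exists l.
rewrite -cvg_shiftS in hl; apply: cvg_trans hl; apply: near_eq_cvg; near=> N.
rewrite /series /=.
by rewrite big_add1 /= big_mkord.
Unshelve. all: by end_near.
Qed.

Lemma AC_diffs b K K' : AC b K' -> 0 <= K -> K < K' -> AC (pseries_diffs b) K.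
Proof.
move=> h K0 KK; set e := K' - K.
have e0 : 0 < e by rewrite subr_gt0.
have hs := series_shift1 h.
have hz := is_cvg_seriesZ (k := e^-1) hs.
apply: series_le_cvg hz => m /=.
- by rewrite mulr_ge0 // exprn_ge0.
- change (0 <= e^-1 * (`|b m.+1| * K' ^+ m.+1)).
  apply: mulr_ge0; first by rewrite invr_ge0 ltW.
  by apply: mulr_ge0; rewrite // exprn_ge0 // (le_trans K0) ?ltW.
change (`|pseries_diffs b m| * K ^+ m <= e^-1 * (`|b m.+1| * K' ^+ m.+1)).
rewrite /pseries_diffs normrM ger0_norm // mulrAC.
have hb := binom_lb m K0 (ltW e0).
rewrite (_ : K + e = K') in hb; last by rewrite /e addrC subrK.
rewrite (mulrC _ `|b m.+1|) (mulrCA e^-1) (mulrC e^-1).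
apply: ler_wpM2l => //.
rewrite ler_pdivlMr //.
by apply: le_trans hb; rewrite lerDr exprn_ge0.
Qed.


Lemma AC_iter b rho : (forall K, 0 <= K -> K < rho -> AC b K) ->
  forall j K, 0 <= K -> K < rho -> AC (iter j (@pseries_diffs R) b) K.
Proof.
move=> hb j; elim: j => [//|j IH] K K0 Kr.
rewrite iterS; apply: (@AC_diffs _ _ ((K + rho) / 2)) => //.
  apply: IH; first by rewrite divr_ge0 // addr_ge0 // (le_trans K0) ?ltW.
  by rewrite ltr_pdivrMr // mulrDr mulr1 ltrD2r.
by rewrite ltr_pdivlMr // mulrDr mulr1 ltrD2l.
Qed.

Lemma near_in_ball (t rho : R) : `|t| < rho -> \forall s \near t, `|s| < rho.
Proof.
move=> tr; exists (rho - `|t|) => /=; first by rewrite subr_gt0.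
move=> s /= hs.
have -> : s = t + (s - t) by rewrite addrC subrK.
rewrite (le_lt_trans (ler_normD _ _)) // -ltrBrDl distrC //.
Qed.

Lemma G_derive b rho j t : (forall K, 0 <= K -> K < rho -> AC b K) -> `|t| < rho ->
  is_derive t (1 : R) (fun x => limn (pseries (iter j (@pseries_diffs R) b) x))
    (limn (pseries (iter j.+1 (@pseries_diffs R) b) t)).
Proof.
move=> hb tr; set K := (`|t| + rho) / 2.
have K0 : 0 <= K by rewrite /K divr_ge0 // addr_ge0 // (le_trans _ (ltW tr)).
have Kr : K < rho by rewrite /K ltr_pdivrMr // mulrDr mulr1 ltrD2r.
have tK : `|t| < `|K|.
  by rewrite [`|K|]ger0_norm // /K ltr_pdivlMr // mulrDr mulr1 ltrD2l.
have hK i : cvgn (pseries (iter i (@pseries_diffs R) b) K).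
  apply: AC_cvg; rewrite [`|K|]ger0_norm //. exact: (AC_iter hb).
have := pseries_snd_diffs (hK j) (hK j.+1) (hK j.+2) tK.
by rewrite iterS.
Qed.

Lemma deriv_iter (g : R -> R) b rho :
  (forall K, 0 <= K -> K < rho -> AC b K) ->
  (forall t, `|t| < rho -> g t = limn (pseries b t)) ->
  forall j t, `|t| < rho -> (g^`(j))%classic t = limn (pseries (iter j (@pseries_diffs R) b) t).
Proof.
move=> hb hg j; elim: j => [|j IH] t tr; first by rewrite derive1n0 hg.
rewrite derive1nS derive1E.
rewrite (@near_eq_derive _ _ _ _ (fun x => limn (pseries (iter j (@pseries_diffs R) b) x))).
  by case: (G_derive j hb tr) => _ ->.
by apply: filterS (near_in_ball tr) => s sr; rewrite IH.
Qed.

Lemma pseries0 c : limn (pseries c (0 : R)) = c 0%N.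
Proof.
apply: lim_near_cst => //; exists 1%N => // -[|N] // _.
rewrite /pseries /series /= big_nat_recl // expr0 mulr1.
by rewrite big1 ?addr0 // => i _; rewrite expr0n mulr0.
Qed.

Lemma iter_pd b k m :
  iter k (@pseries_diffs R) b m * m`!%:R = (m + k)`!%:R * b (m + k)%N.
Proof.
elim: k m => [|k IH] m; first by rewrite addn0 mulrC.
rewrite iterS /pseries_diffs.
set X := iter k _ b.
have -> : m.+1%:R * X m.+1 * m`!%:R = X m.+1 * m.+1`!%:R.
  by rewrite factS natrM; ring.
by rewrite IH addSnnS.
Qed.

Lemma iter_pd0 b k : iter k (@pseries_diffs R) b 0%N = k`!%:R * b k.
Proof. by have := iter_pd b k 0; rewrite fact0 mulr1 add0n. Qed.

End PS.

Section Ident.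
Variable R : realType.
Variable n : nat.
Local Notation Vt := 'rV[R]_n.



Lemma homog_scale k (c : {ffun 'I_n -> 'I_k.+1} -> R) (t : R) (x : Vt) :
  homog_part c (t *: x) = t ^+ k * homog_part c x.
Proof.
rewrite /homog_part mulr_sumr; apply: eq_bigr => a /eqP ha.
rewrite mulrCA; congr (_ * _).
under eq_bigr do rewrite mxE exprMn.
by rewrite big_split /= prodrXr ha.
Qed.

Lemma homog_bound k (c : {ffun 'I_n -> 'I_k.+1} -> R) (h : Vt) (s : R) :
  0 <= s -> (forall i, `|h 0 i| <= s) -> `|homog_part c h| <= abs_homog_part c s.
Proof.
move=> s0 hs; rewrite /homog_part /abs_homog_part.
apply: le_trans (ler_norm_sum _ _ _) _; apply: ler_sum => a /eqP ha.
rewrite normrM ler_wpM2l //.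
rewrite normr_prod; apply: (@le_trans _ _ (\prod_(i < n) s ^+ a i)).
  apply: ler_prod => i _.
  by rewrite normr_ge0 normrX lerXn2r // nnegrE (le_trans _ (hs i)).
by rewrite prodrXr ha.
Qed.

Lemma abs_homog_mono k (c : {ffun 'I_n -> 'I_k.+1} -> R) (s s' : R) :
  0 <= s -> s <= s' -> abs_homog_part c s <= abs_homog_part c s'.
Proof.
move=> s0 ss; apply: ler_sum => a _; rewrite ler_wpM2l //.
by rewrite lerXn2r // nnegrE (le_trans s0).
Qed.

Lemma abs_homog_ge0 k (c : {ffun 'I_n -> 'I_k.+1} -> R) (s : R) :
  0 <= s -> 0 <= abs_homog_part c s.
Proof. by move=> s0; apply: sumr_ge0 => a _; rewrite mulr_ge0 // exprn_ge0. Qed.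

Lemma taylor_pol_eq (V : Vt -> R) (c : forall k : nat, {ffun 'I_n -> 'I_k.+1} -> R) (r : R) :
  0 < r ->
  (exists l : R, series (fun k => abs_homog_part (c k) r) @ \oo --> l) ->
  (forall h : Vt, (forall i, `|h 0 i| < r) ->
          series (fun k => homog_part (c k) h) @ \oo --> V (0 + h)) ->
  forall p x, taylor_pol V p x = \sum_(2 <= k < p.+1) homog_part (c k) x.
Proof.
move=> r0 [l hl] hV p x.
set b := fun k => homog_part (c k) x.
set rho := r / (`|x| + 1).
have x1 : 0 < `|x| + 1 by rewrite ltr_wpDl.
have rho0 : 0 < rho by rewrite divr_gt0.
have hac : cvgn (series (fun k => abs_homog_part (c k) r)) by apply/cvg_ex; exists l.
have hb : forall K, 0 <= K -> K < rho -> AC b K.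
  move=> K K0 Kr; apply: series_le_cvg hac => k.
  - by rewrite mulr_ge0 // exprn_ge0.
  - by rewrite abs_homog_ge0 // ltW.
  rewrite -(ger0_norm K0) -normrX -normrM mulrC /b -homog_scale.
  apply: le_trans (homog_bound _ (mulr_ge0 K0 (normr_ge0 x)) _) _.
    by move=> i; rewrite mxE normrM (ger0_norm K0) ler_wpM2l // entry_le_norm.
  apply: abs_homog_mono; first by rewrite mulr_ge0.
  rewrite (le_trans (ler_wpM2l K0 (ler_wpDr ler01 (lexx `|x|)))) //.
  by rewrite -ler_pdivlMr // ltW.
have hg : forall t, `|t| < rho -> V (t *: x) = limn (pseries b t).
  move=> t tr; apply/esym/cvg_lim => //.
  have -> : pseries b t = series (fun k => homog_part (c k) (t *: x)).
    by apply/funext => N; rewrite /pseries /series /=; apply: eq_bigr => k _;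
       rewrite homog_scale mulrC.
  rewrite -[X in _ --> V X]add0r; apply: hV => i.
  rewrite mxE normrM (le_lt_trans (ler_wpM2l (normr_ge0 t) (entry_le_norm _ _))) //.
  rewrite (le_lt_trans (ler_wpM2l (normr_ge0 t) (ler_wpDr ler01 (lexx `|x|)))) //.
  by rewrite -ltr_pdivlMr.
rewrite /taylor_pol; apply: eq_bigr => k _.
rewrite (deriv_iter hb hg) ?normr0 // pseries0 iter_pd0 mulrC mulKf //.
Qed.
End Ident.

Section Alg.
Variable R : realType.

Lemma absP (x e : R) : `|x| <= e -> - e <= x /\ x <= e.
Proof. by rewrite ler_norml => /andP. Qed.

Lemma DY_alg (X1 X0 c Lw Lv dy t e1 e2 e3 B : R) : 0 < t ->
  `|X1 - X0 - t * dy| <= e1 -> `|X1 - c - (Lw + t * Lv)| <= e2 ->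
  `|X0 - c - Lw| <= e3 -> e1 + e2 + e3 <= t * B -> dy <= Lv + B.
Proof.
move=> t0 /absP[h1 h1'] /absP[h2 h2'] /absP[h3 h3'] h4.
rewrite -(ler_pM2l t0) mulrDr; lra.
Qed.

Lemma DOWN_alg (X Y u dy K v2 s1 b : R) : 0 <= u -> u <= s1 -> 0 <= K -> 0 <= v2 ->
  `|X - Y - u * dy| <= K * (u ^+ 2 * v2) -> dy <= - (b / 2) -> K * s1 * v2 <= b / 4 ->
  X <= Y - u * (b / 4).
Proof.
move=> u0 us K0 v0 /absP[h1 h1'] hd hs.
have e1 : u * dy <= u * (- (b / 2)) by rewrite ler_wpM2l.
have e2 : K * (u ^+ 2 * v2) <= u * (b / 4).
  have -> : K * (u ^+ 2 * v2) = u * (K * u * v2) by ring.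
  rewrite ler_wpM2l // (le_trans _ hs) // ler_wpM2r // ler_wpM2l //.
lra.
Qed.

Lemma ACROSS_alg (X c Lw Lv s1 K eta a b : R) : 0 < s1 -> 0 < b ->
  `|X - c - (Lw + s1 * Lv)| <= K * a -> `|Lw| <= K * eta ->
  K * eta < s1 * (b / 2) -> K * a <= s1 * (b / 4) -> Lv = - b -> X < c.
Proof.
move=> s0 b0 /absP[h1 h1'] /absP[h2 h2'] h3 h4 hL.
rewrite hL in h1 h1'.
have : 0 < s1 * b by rewrite mulr_gt0.
rewrite !mulrA in h3 h4.
move: h3 h4 h1' h2'; rewrite mulrN; set P := s1 * b; lra.
Qed.


Lemma DY2 (X1 X0 c Lw Lv dy t K nv a eta b : R) : 0 < t -> t <= eta -> 0 <= K ->
  0 <= nv -> 0 <= a -> a <= t * (1 + nv) ->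
  `|X1 - X0 - t * dy| <= K * (t * nv) ^+ 2 ->
  `|X1 - c - (Lw + t * Lv)| <= K * a ^+ 2 ->
  `|X0 - c - Lw| <= K * t ^+ 2 ->
  eta * (K * ((1 + nv) ^+ 2 + 1 + nv ^+ 2)) < b / 2 -> Lv = - b -> dy <= - (b / 2).
Proof.
move=> t0 te K0 nv0 a0 hat h1 h2 h3 hb hL.
set C1 := (1 + nv) ^+ 2 + 1 + nv ^+ 2.
rewrite -/C1 in hb.
have C10 : 0 <= C1 by rewrite /C1 !addr_ge0 // ?exprn_ge0 // addr_ge0.
have ha : a ^+ 2 <= (t * (1 + nv)) ^+ 2 by rewrite lerXn2r // nnegrE // mulr_ge0 ?addr_ge0 // ltW.
have hs : K * (t * nv) ^+ 2 + K * a ^+ 2 + K * t ^+ 2 <= t * (K * t * C1).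
  have -> : t * (K * t * C1) = K * (t * nv) ^+ 2 + K * (t * (1 + nv)) ^+ 2 + K * t ^+ 2.
    by rewrite /C1; ring.
  by rewrite lerD2r lerD2l ler_wpM2l.
have := DY_alg t0 h1 h2 h3 hs.
have : K * t * C1 <= eta * (K * C1).
  have -> : K * t * C1 = t * (K * C1) by ring.
  by rewrite ler_wpM2r // mulr_ge0.
rewrite hL -/C1 in hb *; move: hb; lra.
Qed.

Lemma KS (K s1 V1 nv b : R) : 0 <= K -> 0 <= s1 -> 0 <= nv -> nv <= V1 ->
  s1 * (K * V1 ^+ 2) < b / 4 -> K * s1 * nv ^+ 2 <= b / 4.
Proof.
move=> K0 s0 nv0 nvV h; apply: le_trans (ltW h).
have -> : K * s1 * nv ^+ 2 = s1 * (K * nv ^+ 2) by ring.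
rewrite ler_wpM2l // ler_wpM2l //.
by rewrite lerXn2r // nnegrE (le_trans nv0).
Qed.

Lemma le_M3 (a b : R) : 0 <= a -> 1 + b <= a + b + 2.
Proof. lra. Qed.
Lemma le_M1 (a b : R) : 0 <= a -> 0 <= b -> 1 <= a + b + 2.
Proof. lra. Qed.

Lemma KA (K s1 V1 x b : R) : 0 <= K -> 0 <= s1 -> 0 <= x -> x <= s1 * V1 ->
  s1 * (K * V1 ^+ 2) < b / 4 -> K * x ^+ 2 <= s1 * (b / 4).
Proof.
move=> K0 s0 x0 xs h.
have h1 : x ^+ 2 <= (s1 * V1) ^+ 2 by rewrite lerXn2r // nnegrE (le_trans x0).
apply: le_trans (ler_wpM2l K0 h1) _.
have -> : K * (s1 * V1) ^+ 2 = s1 * (s1 * (K * V1 ^+ 2)) by ring.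
by rewrite ler_wpM2l // ltW.
Qed.

Lemma LW (a s nv : R) : a <= s -> a + s * nv <= s * (nv + 1).
Proof. by move=> h; rewrite mulrDr mulr1 addrC lerD2l. Qed.

Lemma sV1M (s V1 qn : R) : 0 <= s -> s <= 1 -> 0 <= V1 -> 0 <= qn -> s * V1 <= qn + (V1 - 1) + 2.
Proof.
move=> s0 s1 V0 q0; have : s * V1 <= V1 by rewrite ler_piMl.
lra.
Qed.
Lemma le_M4 (a b : R) : 0 <= a -> b + 1 <= a + b + 2.
Proof. lra. Qed.

Lemma Y0a (eta a : R) : 0 < eta -> eta < 1 -> 0 <= a ->
  0 <= 1 - eta / (2 * (a + 1)) /\ 1 - eta / (2 * (a + 1)) < 1.
Proof.
move=> e0 e1 a0; have d0 : 0 < 2 * (a + 1) by rewrite mulr_gt0 // ltr_wpDl.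
have x0 : 0 < eta / (2 * (a + 1)) by rewrite divr_gt0.
have x1 : eta / (2 * (a + 1)) <= 1.
  rewrite ler_pdivrMr // mul1r; apply: le_trans (ltW e1) _; lra.
split; lra.
Qed.

Lemma Y0b (eta a : R) : 0 < eta -> 0 <= a -> eta / (2 * (a + 1)) * a < eta.
Proof.
move=> e0 a0; have d0 : 0 < 2 * (a + 1) by rewrite mulr_gt0 // ltr_wpDl.
rewrite mulrAC ltr_pdivrMr // ltr_pM2l //; lra.
Qed.

Lemma lt_chain (X Y P c : R) : X <= Y - P -> 0 <= P -> Y < c -> X < c.
Proof. lra. Qed.

Lemma lt_chain2 (X Y u b c : R) : X <= Y - u * (b / 4) -> 0 < u -> 0 < b -> Y <= c -> X < c.
Proof.
move=> h u0 b0 Yc; have : 0 < u * (b / 4) by rewrite mulr_gt0 // divr_gt0.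
lra.
Qed.

Lemma CV (t a b e : R) : 0 <= t -> t <= 1 -> a < e -> b < e -> (1 - t) * a + t * b < e.
Proof.
move=> t0 t1 ae be; set m := Num.max a b.
have am : a <= m by rewrite le_max lexx.
have bm : b <= m by rewrite le_max lexx orbT.
have me : m < e by rewrite gt_max ae be.
have h1 : (1 - t) * a <= (1 - t) * m by rewrite ler_wpM2l // subr_ge0.
have h2 : t * b <= t * m by rewrite ler_wpM2l.
have -> : e = (1 - t) * e + t * e by ring.
have h3 : (1 - t) * m <= (1 - t) * e by rewrite ler_wpM2l ?subr_ge0 // ltW.
have h4 : t * m <= t * e by rewrite ler_wpM2l // ltW.
case: (eqVneq t 0) => [t00|tn0]; first by rewrite t00; lra.
have : t * m < t * e by rewrite ltr_pM2l // lt_def tn0 t0.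
lra.
Qed.

Lemma Ub (t s s1 : R) : 0 <= t -> t <= 1 -> 0 < s -> s <= s1 ->
  s <= s1 + t * (s - s1) /\ s1 + t * (s - s1) <= s1.
Proof.
move=> t0 t1 s0 ss.
have h : t * (s - s1) <= 0 by rewrite mulr_ge0_le0 // subr_le0.
have h' : (1 - t) * (s1 - s) >= 0 by rewrite mulr_ge0 // subr_ge0.
have -> : s1 + t * (s - s1) = s + (1 - t) * (s1 - s) by ring.
split; first by rewrite lerDl.
have t1' : 1 - t <= 1 by lra.
have h2 : (1 - t) * (s1 - s) <= s1 - s by rewrite ler_piMl // subr_ge0.
lra.
Qed.

Lemma SM (s e nv : R) : 0 <= s -> s <= e / (nv + 1) -> 0 <= nv -> 0 < e -> s * nv < e.
Proof.
move=> s0 se nv0 e0; have V0 : 0 < nv + 1 by rewrite ltr_wpDl.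
apply: (le_lt_trans (ler_wpM2r nv0 se)).
rewrite mulrAC ltr_pdivrMr // ltr_pM2l //; lra.
Qed.
End Alg.

Section Main.
Variable R : realType.
Variable n : nat.
Local Notation Vt := 'rV[R]_n.
Variable f : Vt -> Vt.
Variable W : Vt -> R.
Hypothesis hW : Pol W.

Lemma adm_cases a S x : admissible f W a S -> S x -> interior S x \/ W x = a.
Proof.
move=> [[cS _ _] [_ hb _ _]] Sx.
case: (pselect (interior S x)) => hx; [by left | right].
by apply: hb; split => //; rewrite -(closure_id S).1.
Qed.

Lemma adm_le a S x : admissible f W a S -> S x -> W x <= a.
Proof.
move=> hS Sx; case: (adm_cases hS Sx) => [hi|->//].
by case: hS => _ [hi' _ _ _]; apply/ltW/hi'.
Qed.

Lemma adm_int a S x : admissible f W a S -> S x -> W x < a -> interior S x.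
Proof. by move=> hS Sx; case: (adm_cases hS Sx) => [//|->]; rewrite ltxx. Qed.

Lemma adm_intlt a S x : admissible f W a S -> interior S x -> W x < a.
Proof. by case=> _ [hi _ _ _]; apply: hi. Qed.

Lemma adm_G a S x : admissible f W a S -> S x -> x != 0 ->
  0 < W x /\ lie_deriv f W x < 0.
Proof.
case=> _ [_ _ _ hG] Sx x0; have [T [_ _ _ hT Tx]] := hG x Sx.
exact: hT.
Qed.

Lemma small3 (C1 C2 C3 D : R) : 0 <= C1 -> 0 <= C2 -> 0 <= C3 -> 0 < D ->
  exists t, 0 < t /\ [/\ t * C1 < D, t * C2 < D & t * C3 < D].
Proof.
move=> h1 h2 h3 D0; set S := C1 + C2 + C3 + 1.
have S0 : 0 < S by rewrite /S ltr_pwDr // !addr_ge0.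
exists (D / S); split; first by rewrite divr_gt0.
have hC C : 0 <= C -> C <= C1 + C2 + C3 -> D / S * C < D.
  move=> C0 CS; rewrite mulrAC ltr_pdivrMr // ltr_pM2l //.
  by rewrite /S (le_lt_trans CS) // ltrDl.
split; apply: hC => //; lra.
Qed.

Lemma LM_alg (X Wm d t K v : R) : 0 < t -> d != 0 -> 0 <= K -> 0 <= v ->
  t * (K * v ^+ 2) < 1 ->
  `|X - Wm - (- t * d) * d| <= K * (t * `|d| * v) ^+ 2 -> X < Wm.
Proof.
move=> t0 d0 K0 v0 h1 h2.
have a0 : 0 < `|d| by rewrite normr_gt0.
have e1 : (- t * d) * d = - (t * `|d| ^+ 2) by rewrite (real_normK (num_real d)); ring.
have e2 : K * (t * `|d| * v) ^+ 2 = (t * `|d| ^+ 2) * (t * (K * v ^+ 2)) by ring.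
rewrite e1 e2 in h2.
have P0 : 0 < t * `|d| ^+ 2 by rewrite mulr_gt0 // exprn_gt0.
have h3 := ltr_pM2l P0 (t * (K * v ^+ 2)) 1.
rewrite h1 mulr1 in h3.
have h4 := ler_norm (X - Wm - - (t * `|d| ^+ 2)).
move: h2 h3 h4; set P := t * `|d| ^+ 2; set Q := t * (K * v ^+ 2); lra.
Qed.

Lemma LM m v (e : R) : 0 < e -> (forall z, `|m - z| < e -> W m <= W z) -> 'd W m v = 0.
Proof.
move=> e0 hmin; set d := 'd W m v.
case: (eqVneq d 0) => // dn0; exfalso.
set M := `|m| + `|v| + 1.
have M0 : 0 < M by rewrite /M ltr_pwDr // addr_ge0.
have [K [K0 hK]] := hW.2 M M0.
have m0 : 0 < Num.min e 1 by rewrite lt_min e0 ltr01.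
have [t [t0 [ht1 ht2 _]]] := small3 (mulr_ge0 (normr_ge0 d) (normr_ge0 v))
   (mulr_ge0 (ltW K0) (exprn_ge0 2 (normr_ge0 v))) (lexx 0)
   m0.
set z := (- t * d) *: v.
have hz : `|z| = t * (`|d| * `|v|).
  by rewrite /z normrZ normrM normrN (gtr0_norm t0) mulrA.
have hz1 : `|z| < Num.min e 1 by rewrite hz.
have [hze hz1'] : `|z| < e /\ `|z| < 1 by move: hz1; rewrite lt_min => /andP[].
have ht2' : t * (K * `|v| ^+ 2) < 1 by move: ht2; rewrite lt_min => /andP[].
have mM : `|m| <= M by rewrite /M -addrA lerDl addr_ge0.
have zM : `|z| <= M.
  by rewrite (le_trans (ltW hz1')) // /M lerDr addr_ge0.
have [_ _ hE] := hK m z mM zM.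
have dz : 'd W m z = (- t * d) * d by rewrite /z linearZ.
rewrite dz hz (mulrA t) in hE.
have := LM_alg t0 dn0 (ltW K0) (normr_ge0 v) ht2' hE.
have := hmin (m + z); rewrite opprD addrA subrr sub0r normrN => /(_ hze).
by move=> h1 h2; have := le_lt_trans h1 h2; rewrite ltxx.
Qed.

Lemma ball_rV (z0 : Vt) e z : ball z0 e z <-> `|z0 - z| < e.
Proof. by rewrite mx_norm_ball. Qed.

Lemma KEY a S c0 T y : admissible f W a S -> admissible f W c0 T ->
  T y -> W y <= a -> W y < c0 -> S y.
Proof.
move=> hS hT Ty ya yc; case: (pselect (S y)) => // nSy; exfalso.
have [[cS _ iS0] _] := hS.
have [[cT _ _] [_ _ kT _]] := hT.
set Kset := T `&` ~` interior S.
have cK : compact Kset := compact_closedI kT (open_closedC (open_interior S)).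
have yK : Kset y by split => // /interior_subset.
have K0 : Kset !=set0 by exists y.
have contW : {within Kset, continuous W}.
  by apply: continuous_subspaceT => x; exact: differentiable_continuous (hW.1 x).
have [m mK hm] := EVT_min_rV K0 cK contW.
rewrite inE in mK.
have [z0 [z0K z0min z0S z0c]] : exists z0, [/\ Kset z0,
    (forall t, Kset t -> W z0 <= W t), ~ S z0 & W z0 < c0].
  case: (ltP (W m) a) => hma.
  - exists m; split => //.
    + by move=> t tK; apply: hm; rewrite inE.
    + by move=> Sm; apply: mK.2; exact: adm_int hS Sm hma.
    + by apply: le_lt_trans yc; apply: hm; rewrite inE.
  - exists y; split => // t tK.
    by rewrite (le_trans ya) // (le_trans hma) // hm // inE.
have z0T : interior T z0 := adm_int hT z0K.1 z0c.
set O := interior T `&` ~` S.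
have oO : open O := openI (open_interior T) (closed_openC cS).
have : nbhs z0 O by apply: open_nbhs_nbhs; split.
move=> /nbhs_ballP [e e0 he].
have hmin : forall z, `|z0 - z| < e -> W z0 <= W z.
  move=> z /ball_rV /he [zT zS]; apply: z0min; split.
    exact: interior_subset.
  by move/interior_subset.
have hd := LM (f z0) e0 hmin.
have z0n : z0 != 0.
  by apply/eqP => z00; apply: z0S; rewrite z00; exact: interior_subset.
have [_ hl] := adm_G hT z0K.1 z0n.
by move: hl; rewrite /lie_deriv hd ltxx.
Qed.

Lemma seg_cont (p q : Vt) : continuous (fun t : R => p + t *: (q - p)).
Proof.
move=> t; apply: (@continuousD _ _ _ (fun _ => p) (fun t : R => t *: (q - p))).
  exact: cst_continuous.
exact: scalel_continuous.
Qed.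

Lemma SEG a S (p q : Vt) : admissible f W a S ->
  (forall t : R, 0 <= t -> t <= 1 -> W (p + t *: (q - p)) < a) -> S p -> S q.
Proof.
move=> hS hseg Sp; have [[cS _ _] _] := hS.
set I := [set t : R | 0 <= t /\ t <= 1].
have cI : connected I.
  apply/connected_intervalP => x y [x0 _] [_ y1] z /andP[xz zy].
  by split; [exact: le_trans xz | exact: le_trans y1].
set P := [set p + t *: (q - p) | t in I].
have cP : connected P.
  by apply: connected_continuous_connected cI _; apply: continuous_subspaceT; exact: seg_cont.
have hP : forall z, P z -> W z < a by move=> z [t [t0 t1] <-]; exact: hseg.
have Pp : P p by exists 0; [split => //; exact: ler01 | rewrite scale0r addr0].
have Pq : P q by exists 1; [split => //; exact: ler01 | rewrite scale1r addrC subrK].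
have e := cP (P `&` S) (ex_intro _ p (conj Pp Sp)).
have : P `&` S = P.
  apply: e.
  - exists (interior S); first exact: open_interior.
    apply/seteqP; split => z [Pz Sz]; split => //.
      exact: adm_int hS Sz (hP z Pz).
    exact: interior_subset.
  - by exists S.
by move=> hPS; have := Pq; rewrite -hPS => -[].
Qed.

Lemma sq_le (a b : R) : 0 <= a -> a <= b -> a ^+ 2 <= b ^+ 2.
Proof. by move=> a0 ab; rewrite lerXn2r // nnegrE (le_trans a0). Qed.

Lemma LOCAL c A q : admissible f W c A -> star_property A -> A q ->
  exists2 eta : R, 0 < eta & forall h, W h <= c -> `|h - q| < eta -> A h.
Proof.
move=> hA hstar Aq.
have [[cA _ iA0] _] := hA.
case: (pselect (interior A q)) => iq.
  have : nbhs q (interior A) by apply: open_nbhs_nbhs; split => //; exact: open_interior.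
  move=> /nbhs_ballP[e e0 he]; exists e => // h _ hq.
  by apply: interior_subset; apply: he; apply/ball_rV; rewrite distrC.
have Wq : W q = c by case: (adm_cases hA Aq).
have q0 : q != 0 by apply/eqP => q00; apply: iq; rewrite q00.
have [_ hl] := adm_G hA Aq q0.
set v := f q; set L := 'd W q.
set b := - L v.
have b0 : 0 < b by rewrite /b oppr_gt0.
have Lv : L v = - b by rewrite /b opprK.
set M := `|q| + `|v| + 2.
have M0 : 0 < M by rewrite /M ltr_pwDr // addr_ge0.
have [K [K0 hK]] := hW.2 M M0.
set V1 := `|v| + 1.
have V10 : 0 < V1 by rewrite /V1 ltr_pwDr.
have mb0 : 0 < Num.min 1 (b / 4) by rewrite lt_min ltr01 divr_gt0.
have [s1 [s10 [hs1a hs1b _]]] := small3 ler01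
   (mulr_ge0 (ltW K0) (exprn_ge0 2 (ltW V10))) (lexx 0) mb0.
rewrite mulr1 in hs1a.
have [s11 hs1K] : s1 < 1 /\ s1 * (K * V1 ^+ 2) < b / 4.
  by move: hs1a hs1b; rewrite !lt_min => /andP[-> _] /andP[_ ->].
set C1 := (1 + `|v|) ^+ 2 + 1 + `|v| ^+ 2.
have C10 : 0 <= C1 by rewrite /C1 !addr_ge0 // exprn_ge0 // addr_ge0.
have me0 : 0 < Num.min (Num.min s1 1) (Num.min (s1 * (b / 2)) (b / 2)).
  by rewrite !lt_min s10 ltr01 mulr_gt0 // divr_gt0.
have [eta [eta0 [he1 he2 he3]]] := small3 ler01 (ltW K0) (mulr_ge0 (ltW K0) C10) me0.
rewrite mulr1 in he1.
have [es1 e1 eKs eKC] : [/\ eta < s1, eta < 1, eta * K < s1 * (b / 2) & eta * (K * C1) < b / 2].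
  move: he1 he2 he3; rewrite !lt_min.
  by move=> /andP[/andP[-> ->] _] /andP[_ /andP[-> _]] /andP[_ /andP[_ ->]].
have qM : `|q| <= M by rewrite /M -addrA lerDl addr_ge0.
have vM : `|v| <= M by rewrite /M -addrA; apply: ler_wpDl => //; rewrite lerDl.
have v2 : `|v| <= V1 by rewrite /V1 lerDl.
have DY : forall y, `|y - q| < eta -> 'd W y v <= - (b / 2).
  move=> y hy.
  case: (eqVneq y q) => [->|yq].
    rewrite -/L Lv lerN2 ler_pdivrMr // ler_peMr ?ltW //.
    by rewrite ltr1n.
  set w := y - q; set t := `|w|.
  have t0 : 0 < t by rewrite normr_gt0 subr_eq0.
  have t1 : t <= 1 by rewrite ltW // (lt_trans hy e1).
  have qw : q + w = y by rewrite /w addrC subrK.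
  have tv2 : t <= `|v| + 2 by rewrite (le_trans t1) // ler_wpDl // (ler_nat R 1 2).
  have yM : `|y| <= M.
    by rewrite -qw (le_trans (ler_normD _ _)) // /M -addrA lerD2l.
  have tvM : `|t *: v| <= M.
    by rewrite normrZ (ger0_norm (ltW t0)); apply: (le_trans _ vM); rewrite ler_piMl.
  have wtv : `|w + t *: v| <= t * (1 + `|v|).
    by rewrite (le_trans (ler_normD _ _)) // normrZ (ger0_norm (ltW t0)) mulrDr mulr1.
  have wtvM : `|w + t *: v| <= M.
    rewrite (le_trans wtv) // (le_trans (ler_wpM2r _ t1)) ?addr_ge0 // mul1r.
    exact: le_M3.
  have wM : `|w| <= M by rewrite (le_trans t1) // le_M1.
  have [_ _ E1] := hK y (t *: v) yM tvM.
  have [_ _ E2] := hK q (w + t *: v) qM wtvM.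
  have [_ _ E3] := hK q w qM wM.
  rewrite linearZ /= normrZ (ger0_norm (ltW t0)) in E1.
  rewrite addrA qw linearD linearZ /= -/L Wq in E2.
  rewrite qw Wq -/t in E3.
  exact: DY2 t0 (ltW hy) (ltW K0) (normr_ge0 v) (normr_ge0 _) wtv E1 E2 E3 eKC Lv.
have nearM : forall y, `|y - q| < eta -> `|y| <= M.
  move=> y hy; have -> : y = q + (y - q) by rewrite addrC subrK.
  rewrite (le_trans (ler_normD _ _)) // /M -addrA lerD2l.
  by rewrite (le_trans (ltW (lt_trans hy e1))) // ler_wpDl // (ler_nat R 1 2).
have DOWN : forall y u, `|y - q| < eta -> 0 <= u -> u <= s1 ->
    W (y + u *: v) <= W y - u * (b / 4).
  move=> y u hy u0 us.
  have uvM : `|u *: v| <= M.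
    rewrite normrZ (ger0_norm u0); apply: (le_trans _ vM); rewrite ler_piMl //.
    exact: le_trans us (ltW s11).
  have [_ _ E] := hK y (u *: v) (nearM y hy) uvM.
  rewrite linearZ /= normrZ (ger0_norm u0) exprMn in E.
  exact: DOWN_alg u0 us (ltW K0) (exprn_ge0 2 (normr_ge0 v)) E (DY y hy)
    (KS (ltW K0) (ltW s10) (normr_ge0 v) v2 hs1K).
have ACROSS : forall z, `|z - (q + s1 *: v)| < eta -> W z < c.
  move=> z hz; set w := z - (q + s1 *: v).
  have zq : q + (w + s1 *: v) = z by apply/rowP => i; rewrite /w !mxE; ring.
  have ws : `|w + s1 *: v| <= s1 * V1.
    rewrite (le_trans (ler_normD _ _)) // normrZ (ger0_norm (ltW s10)) /V1.
    exact/LW/ltW/(lt_trans hz es1).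
  have wsM : `|w + s1 *: v| <= M.
    rewrite (le_trans ws) // (le_trans (ler_piMl (ltW V10) (ltW s11))) // /V1 /M.
    exact: le_M4.
  have wM : `|w| <= M by rewrite (le_trans (ltW (lt_trans hz e1))) // le_M1.
  have [_ _ E] := hK q (w + s1 *: v) qM wsM.
  rewrite zq linearD linearZ /= -/L Wq in E.
  have [_ B2 _] := hK q w qM wM.
  rewrite -/L in B2.
  have B2' : `|L w| <= K * eta by rewrite (le_trans B2) // ler_wpM2l // ltW // ltW.
  have eKs' : K * eta < s1 * (b / 2) by rewrite mulrC.
  exact: ACROSS_alg s10 b0 E B2' eKs' (KA (ltW K0) (ltW s10) (normr_ge0 _) ws hs1K) Lv.
set l := 1 - eta / (2 * (`|q| + 1)).
have [l0 l1] := Y0a eta0 e1 (normr_ge0 q).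
have iy0 := hstar q Aq l l0 l1.
set y0 := l *: q.
have hy0 : `|y0 - q| < eta.
  have -> : y0 - q = (- (eta / (2 * (`|q| + 1)))) *: q.
    by apply/rowP => i; rewrite /y0 /l !mxE; ring.
  rewrite normrZ normrN ger0_norm; first exact: Y0b eta0 (normr_ge0 q).
  by rewrite divr_ge0 ?ltW // mulr_ge0 // addr_ge0.
have Wy0 : W y0 < c := adm_intlt hA iy0.
exists eta => // h Wh hq.
have S1 : A (y0 + s1 *: v).
  apply: (SEG hA _ (interior_subset iy0)) => t t0 t1.
  have -> : y0 + t *: (y0 + s1 *: v - y0) = y0 + (t * s1) *: v.
    by apply/rowP => i; rewrite !mxE; ring.
  have ts : t * s1 <= s1 by rewrite ler_piMl // ltW.
  apply: lt_chain (DOWN y0 (t * s1) hy0 (mulr_ge0 t0 (ltW s10)) ts) _ Wy0.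
  by rewrite !mulr_ge0 // ?ltW // divr_ge0 // ltW.
have S2 : A (h + s1 *: v).
  apply: (SEG hA _ S1) => t t0 t1; apply: ACROSS.
  have -> : y0 + s1 *: v + t *: (h + s1 *: v - (y0 + s1 *: v)) - (q + s1 *: v)
      = (1 - t) *: (y0 - q) + t *: (h - q).
    by apply/rowP => i; rewrite !mxE; ring.
  rewrite (le_lt_trans (ler_normD _ _)) // !normrZ ger0_norm ?subr_ge0 //.
  by rewrite (ger0_norm t0); exact: CV.
have S3 : forall s, 0 < s -> s <= s1 -> A (h + s *: v).
  move=> s s0 ss; apply: (SEG hA _ S2) => t t0 t1.
  have -> : h + s1 *: v + t *: (h + s *: v - (h + s1 *: v)) = h + (s1 + t * (s - s1)) *: v.
    by apply/rowP => i; rewrite !mxE; ring.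
  have [u1 u2] := Ub t0 t1 s0 ss.
  have u0 : 0 < s1 + t * (s - s1) by exact: lt_le_trans s0 u1.
  have hq' : `|h - q| < eta by [].
  have H := DOWN h _ hq' (ltW u0) u2.
  exact: lt_chain2 H u0 b0 Wh.
rewrite ((closure_id A).1 cA) => B /nbhs_ballP[e e0 he].
set s := Num.min s1 (e / V1).
have s0 : 0 < s by rewrite lt_min s10 divr_gt0.
have ss1 : s <= s1 by rewrite ge_min lexx.
have se : s <= e / V1 by rewrite ge_min lexx orbT.
exists (h + s *: v); split; first exact: S3.
apply: he; apply/ball_rV.
rewrite opprD addrA subrr sub0r normrN normrZ (ger0_norm (ltW s0)).
exact: SM (ltW s0) se (normr_ge0 v) e0.
Qed.
End Main.

Section Fin.
Variable R : realType.
Variable n : nat.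
Local Notation Vt := 'rV[R]_n.
Variable f : Vt -> Vt.
Variable W : Vt -> R.
Hypothesis hW : Pol W.

Lemma N_sub_A c N A : admissible f W c N -> admissible f W c A -> star_property A -> N `<=` A.
Proof.
move=> hN hA hstar.
have [[_ conN iN0] _] := hN.
have [[cA _ iA0] _] := hA.
set O := fun x : Vt => exists q eta, [/\ A q, 0 < eta,
   (forall h, W h <= c -> `|h - q| < eta -> A h) & `|x - q| < eta].
have oO : open O.
  rewrite openE => x [q [eta [Aq eta0 hq xq]]].
  apply/nbhs_ballP; exists (eta - `|x - q|); first by rewrite /= subr_gt0.
  move=> z /ball_rV xz; exists q, eta; split => //.
  have -> : z - q = (z - x) + (x - q) by rewrite addrA subrK.
  rewrite (le_lt_trans (ler_normD _ _)) // -ltrBrDr distrC //.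
have e : N `&` A = N.
  apply: conN.
  - by exists 0; split; [exact: interior_subset | exact: interior_subset].
  - exists O => //; apply/seteqP; split => x [Nx Hx]; split => //.
      have [eta eta0 heta] := LOCAL hW hA hstar Hx.
      by exists x, eta; split => //; rewrite subrr normr0.
    case: Hx => q [eta [Aq eta0 hq xq]].
    exact: hq (adm_le hN Nx) xq.
  - by exists A.
move=> x Nx; have : (N `&` A) x by rewrite e.
by case.
Qed.

Lemma MAIN c A x l1 l2 : admissible f W c A -> star_property A ->
  (forall c' : R, 0 < c' -> c' <= c ->
     exists N' : set Vt, admissible f W c' N' /\ star_property N') ->
  A x -> x != 0 -> 0 <= l1 -> l1 < l2 -> l2 <= 1 -> W (l1 *: x) < W (l2 *: x).
Proof.
move=> hA hstar hyp Ax x0 l10 l12 l21.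
have l20 : 0 < l2 by apply: le_lt_trans l12.
set z := l2 *: x.
have Az : A z.
  case: (eqVneq l2 1) => [l2e|l2n]; first by rewrite /z l2e scale1r.
  apply: interior_subset; apply: hstar => //; first exact: ltW.
  by rewrite lt_neqAle l2n l21.
have zn0 : z != 0 by rewrite /z scaler_eq0 negb_or x0 andbT gt_eqF.
have [Wz0 _] := adm_G hA Az zn0.
have Wzc := adm_le hA Az.
set l := l1 / l2.
have l0 : 0 <= l by rewrite divr_ge0 // ltW.
have l1' : l < 1 by rewrite ltr_pdivrMr // mul1r.
have lz : l *: z = l1 *: x by rewrite /z scalerA divfK // gt_eqF.
rewrite -lz.
case: (ltP (W z) c) => hz.
  have [S [hS hstarS]] := hyp (W z) Wz0 (ltW hz).
  have Sz := KEY hW hS hA Az (lexx _) hz.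
  exact: adm_intlt hS (hstarS z Sz l l0 l1').
have -> : W z = c by apply/eqP; rewrite eq_le Wzc hz.
exact: adm_intlt hA (hstar z Az l l0 l1').
Qed.
End Fin.

Unset Implicit Arguments.
Theorem theorem2p6 (R : realType) (n : nat)
    (f : 'rV[R]_n -> 'rV[R]_n) (V : 'rV[R]_n -> R) (U : set 'rV[R]_n)
    (p : nat) (c : R) (N : set 'rV[R]_n) :
  (forall i : 'I_n, analytic_on (fun x => f x 0 i) setT) ->
  f 0 = 0 ->
  hurwitz ('J f 0) ->
  open U -> U 0 -> analytic_on V U -> V 0 = 0 ->
  (forall x, U x -> lie_deriv f V x = - sqnorm x) ->
  (2 <= p)%N -> 0 < c ->
  admissible f (taylor_pol V p) c N ->
  (forall c' : R, 0 < c' -> c' <= c ->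
     exists N' : set 'rV[R]_n,
       admissible f (taylor_pol V p) c' N' /\ star_property N') ->
  forall x : 'rV[R]_n, N x -> x != 0 ->
  forall l1 l2 : R, 0 <= l1 -> l1 < l2 -> l2 <= 1 ->
    taylor_pol V p (l1 *: x) < taylor_pol V p (l2 *: x).
Proof.
move=> _ _ _ _ U0 hVa _ _ _ c0 hN hyp x Nx x0 l1 l2 l10 l12 l21.
have [cc [r [r0 hl hV]]] := hVa 0 U0.
have eW := taylor_pol_eq r0 hl hV p.
have hW : Pol (taylor_pol V p).
  apply: (@Pol_ext _ _ (fun y => \sum_(2 <= k < p.+1) homog_part (cc k) y)).
    by move=> y; rewrite eW.
  by apply: Pol_sum => k; exact: Pol_homog.
have [A [hA hstar]] := hyp c c0 (lexx c).
have NA := N_sub_A hW hN hA hstar.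
exact: (MAIN hW hA hstar hyp (NA x Nx) x0 l10 l12 l21).
Qed.
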